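(* Let $C$ be an algebraically closed field of characteristic zero. If $H$ is an irreducible and imprimitive algebraic subgroup of $\mathrm{GL}_2(C)$ such that $H/H^\circ$ is bicyclic (a product of two finite cyclic groups), then, up to conjugation, $H$ is the subgroup of \[\{\pm1\}\ltimes\mathbb{G}_m(C)^2=\left\{\begin{pmatrix}\alpha_1&0\\0&\alpha_2\end{pmatrix}:\alpha_1\alpha_2\neq0\right\}\cup\left\{\begin{pmatrix}0&\lambda_1\\\lambda_2&0\end{pmatrix}:\lambda_1\lambda_2\neq0\right\}\] defined by precisely one of the following sets of conditions: (1) $H=D_m^-$ for some $m\in\mathbb{N}$: $(\alpha_1\alpha_2)^m=1$ and $(\lambda_1\lambda_2)^m=-1$; (2) $H=D_m^+$ for some $m\in\mathbb{N}$: $(\alpha_1\alpha_2)^m=1$ and $(\lambda_1\lambda_2)^m=1$; (3) $H=\{\pm1\}^2\ltimes\mathbb{G}_m(C)$: $\alpha_1^2=\alpha_2^2$ and $\lambda_1^2=\lambda_2^2$; (4) $H=\{\pm1\}\ltimes\mathbb{G}_m(C)^2$, with no further conditions.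
   Context: $H^\circ$ denotes the identity component of $H$. A subgroup of $\mathrm{GL}_2(C)$ is irreducible if it has no invariant line in $C^2$, and imprimitive if it is irreducible and conjugate to a subgroup of the group of monomial (invertible diagonal or anti-diagonal) matrices. *)

(* Defs.v *)
From HB Require Import structures.
From mathcomp Require Import all_boot all_order all_algebra.
From mathcomp Require Import mpoly.
Set Implicit Arguments. Unset Strict Implicit. Unset Printing Implicit Defensive.
Import Order.TTheory GRing.Theory.
Local Open Scope ring_scope.

Section GL2.
Variable C : closedFieldType.
Notation mx := 'M[C]_2.

Definition mx_coords (g : mx) : 'I_(2 * 2) -> C := fun i => mxvec g 0 i.

Definition zero_locus (S : {mpoly C[2 * 2]} -> Prop) (g : mx) : Prop :=
  forall p, S p -> p.@[mx_coords g] = 0.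

Definition is_subgroup_GL2 (H : mx -> Prop) : Prop :=
  [/\ forall g, H g -> g \in unitmx,
      H 1%:M,
      forall g h, H g -> H h -> H (g *m h)
    & forall g, H g -> H (invmx g)].

Definition zariski_closed_GL2 (H : mx -> Prop) : Prop :=
  exists S, forall g, g \in unitmx -> (H g <-> zero_locus S g).

Definition algebraic_subgroup_GL2 (H : mx -> Prop) : Prop :=
  is_subgroup_GL2 H /\ zariski_closed_GL2 H.

(* Y is connected for the (subspace) Zariski topology: it is not the union
   of two disjoint nonempty relatively closed subsets. *)
Definition zariski_connected (Y : mx -> Prop) : Prop :=
  forall S1 S2 : {mpoly C[2 * 2]} -> Prop,
    (forall g, Y g -> zero_locus S1 g \/ zero_locus S2 g) ->
    (forall g, Y g -> zero_locus S1 g -> zero_locus S2 g -> False) ->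
    (forall g, Y g -> zero_locus S1 g) \/ (forall g, Y g -> zero_locus S2 g).

(* identity component H° : the connected component of 1 in H *)
Definition identity_component (H : mx -> Prop) (g : mx) : Prop :=
  exists Y : mx -> Prop,
    [/\ forall x, Y x -> H x, zariski_connected Y, Y 1%:M & Y g].

(* H/H° is a product of two finite cyclic groups: it is generated by the
   cosets of two elements a, b that commute modulo H° and have finite order
   modulo H°. *)
Definition bicyclic_quotient (H K : mx -> Prop) : Prop :=
  exists a b : mx, exists n m : nat,
    [/\ H a /\ H b, (0 < n)%N /\ (0 < m)%N,
        K (a ^+ n) /\ K (b ^+ m),
        K (a *m b *m invmx a *m invmx b)
      & forall h, H h -> exists i j : nat, K (invmx h *m (a ^+ i *m b ^+ j))].

Definition irreducible_GL2 (H : mx -> Prop) : Prop :=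
  ~ exists v : 'cV[C]_2, v != 0 /\ forall h, H h -> exists c : C, h *m v = c *: v.

Definition diag_nonsing (x : mx) : Prop :=
  [/\ x 0 1 = 0, x 1 0 = 0 & x 0 0 * x 1 1 != 0].
Definition antidiag_nonsing (x : mx) : Prop :=
  [/\ x 0 0 = 0, x 1 1 = 0 & x 0 1 * x 1 0 != 0].
Definition monomial (x : mx) : Prop := diag_nonsing x \/ antidiag_nonsing x.

Definition conj_set (P : mx) (H : mx -> Prop) (x : mx) : Prop :=
  H (P *m x *m invmx P).

Definition imprimitive_GL2 (H : mx -> Prop) : Prop :=
  irreducible_GL2 H /\
  exists P, P \in unitmx /\ forall x, conj_set P H x -> monomial x.

(* The four families: alpha_1 = x 0 0, alpha_2 = x 1 1,
   lambda_1 = x 0 1, lambda_2 = x 1 0. *)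
Definition Dminus (m : nat) (x : mx) : Prop :=
  (diag_nonsing x /\ (x 0 0 * x 1 1) ^+ m = 1) \/
  (antidiag_nonsing x /\ (x 0 1 * x 1 0) ^+ m = -1).
Definition Dplus (m : nat) (x : mx) : Prop :=
  (diag_nonsing x /\ (x 0 0 * x 1 1) ^+ m = 1) \/
  (antidiag_nonsing x /\ (x 0 1 * x 1 0) ^+ m = 1).
Definition Vgroup (x : mx) : Prop :=
  (diag_nonsing x /\ x 0 0 ^+ 2 = x 1 1 ^+ 2) \/
  (antidiag_nonsing x /\ x 0 1 ^+ 2 = x 1 0 ^+ 2).
Definition fullmonomial (x : mx) : Prop := monomial x.

Definition conj_to (H G : mx -> Prop) : Prop :=
  exists P, P \in unitmx /\ forall x, conj_set P H x <-> G x.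

Definition case1 (H : mx -> Prop) := exists m : nat, (0 < m)%N /\ conj_to H (Dminus m).
Definition case2 (H : mx -> Prop) := exists m : nat, (0 < m)%N /\ conj_to H (Dplus m).
Definition case3 (H : mx -> Prop) := conj_to H Vgroup.
Definition case4 (H : mx -> Prop) := conj_to H fullmonomial.

Definition exactly_one4 (A B D E : Prop) : Prop :=
  (A \/ B \/ D \/ E) /\
  [/\ ~ (A /\ B), ~ (A /\ D), ~ (A /\ E), ~ (B /\ D) & ~ (B /\ E) /\ ~ (D /\ E)].
End GL2.

(* Main.v *)
Require Import Defs.
From HB Require Import structures.
From mathcomp Require Import all_boot all_order all_algebra.
From mathcomp Require Import mpoly.
From Stdlib Require Import Classical ClassicalEpsilon.
From mathcomp Require Import ring.
Import GRing.Theory.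
Local Open Scope ring_scope.
Set Implicit Arguments. Unset Strict Implicit. Unset Printing Implicit Defensive.

Lemma ord2P (i : 'I_2) : i = 0 \/ i = 1.
Proof. by case: i => [[|[|//]] Hi]; [left|right]; apply/val_inj. Qed.

Lemma big_ord2 (R : nmodType) (F : 'I_2 -> R) : \sum_(i < 2) F i = F 0 + F 1.
Proof. by rewrite !big_ord_recl big_ord0 addr0; congr (_ + F _); apply/val_inj. Qed.

Section Basics.
Variable C : closedFieldType.
Notation mx := 'M[C]_2.

Lemma mx2P (A B : mx) : A 0 0 = B 0 0 -> A 0 1 = B 0 1 -> A 1 0 = B 1 0 ->
  A 1 1 = B 1 1 -> A = B.
Proof.
move=> h1 h2 h3 h4; apply/matrixP => i j.
by case: (ord2P i) => ->; case: (ord2P j) => ->.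
Qed.
Lemma mulmx2E (A B : mx) i j : (A *m B) i j = A i 0 * B 0 j + A i 1 * B 1 j.
Proof. by rewrite mxE big_ord2. Qed.

Definition mk2 (a b c d : C) : mx :=
  \matrix_(i < 2, j < 2) if i == 0 then (if j == 0 then a else b)
                         else (if j == 0 then c else d).

Lemma mk2E a b c d :
  [/\ mk2 a b c d 0 0 = a, mk2 a b c d 0 1 = b, mk2 a b c d 1 0 = c
    & mk2 a b c d 1 1 = d].
Proof. by rewrite !mxE. Qed.

Lemma mk2_00 a b c d : mk2 a b c d 0 0 = a. Proof. by rewrite mxE. Qed.
Lemma mk2_01 a b c d : mk2 a b c d 0 1 = b. Proof. by rewrite mxE. Qed.
Lemma mk2_10 a b c d : mk2 a b c d 1 0 = c. Proof. by rewrite mxE. Qed.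
Lemma mk2_11 a b c d : mk2 a b c d 1 1 = d. Proof. by rewrite mxE. Qed.

Lemma mk2_eta (A : mx) : A = mk2 (A 0 0) (A 0 1) (A 1 0) (A 1 1).
Proof. by apply: mx2P; rewrite mxE. Qed.

Lemma mk2M a b c d a' b' c' d' :
  mk2 a b c d *m mk2 a' b' c' d' =
  mk2 (a * a' + b * c') (a * b' + b * d') (c * a' + d * c') (c * b' + d * d').
Proof. by apply: mx2P; rewrite mulmx2E !mxE. Qed.

Lemma mk2_1 : (1%:M : mx) = mk2 1 0 0 1.
Proof. by apply: mx2P; rewrite !mxE. Qed.

Lemma mk2_scalar a : (a%:M : mx) = mk2 a 0 0 a.
Proof. by apply: mx2P; rewrite !mxE. Qed.

Lemma det2 (A : mx) : \det A = A 0 0 * A 1 1 - A 0 1 * A 1 0.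
Proof.
rewrite (expand_det_row _ 0) big_ord2 /cofactor !det_mx11 !mxE /=.
rewrite !expr0 !mul1r expr1 mulN1r.
have -> : lift 0 (0:'I_1) = 1 :> 'I_2 by apply/val_inj.
have -> : lift 1 (0:'I_1) = 0 :> 'I_2 by apply/val_inj.
by rewrite mulrN.
Qed.

Lemma tr2 (A : mx) : \tr A = A 0 0 + A 1 1.
Proof. by rewrite /mxtrace big_ord2. Qed.

Lemma inv_uniq (A B : mx) : A *m B = 1%:M -> invmx A = B.
Proof.
move=> AB; have [uA _] := mulmx1_unit AB.
by rewrite -[invmx A]mulmx1 -AB mulmxA mulVmx // mul1mx.
Qed.

Lemma unit_of (A B : mx) : A *m B = 1%:M -> A \in unitmx.
Proof. by move=> AB; have [] := mulmx1_unit AB. Qed.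

End Basics.

Section LP.
Variable C : closedFieldType.
Notation mx := 'M[C]_2.

Definition LP (f : C -> C) := exists (q : {poly C}) (N : nat),
  forall s, s != 0 -> q.[s] = s ^+ N * f s.

Lemma LP_const c : LP (fun _ => c).
Proof. by exists c%:P, 0%N => s _; rewrite hornerC expr0 mul1r. Qed.

Lemma LP_id : LP (fun s => s).
Proof. by exists 'X, 0%N => s _; rewrite hornerX expr0 mul1r. Qed.

Lemma LP_inv : LP (fun s => s^-1).
Proof. by exists 1, 1%N => s s0; rewrite hornerC expr1 mulfV. Qed.

Lemma LP_add f g : LP f -> LP g -> LP (fun s => f s + g s).
Proof.
move=> [q1 [N1 h1]] [q2 [N2 h2]].
exists (q1 * 'X^N2 + q2 * 'X^N1), (N1 + N2)%N => s s0.
rewrite hornerD !hornerM !hornerXn h1 // h2 // exprD; ring.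
Qed.

Lemma LP_mul f g : LP f -> LP g -> LP (fun s => f s * g s).
Proof.
move=> [q1 [N1 h1]] [q2 [N2 h2]].
exists (q1 * q2), (N1 + N2)%N => s s0.
rewrite hornerM h1 // h2 // exprD; ring.
Qed.

Lemma LP_ext f g : (forall s, s != 0 -> f s = g s) -> LP f -> LP g.
Proof. by move=> e [q [N h]]; exists q, N => s s0; rewrite h // e. Qed.

Lemma LP_exp f k : LP f -> LP (fun s => f s ^+ k).
Proof.
move=> hf; elim: k => [|k ih].
  by apply: LP_ext (LP_const 1) => s _; rewrite expr0.
by apply: LP_ext (LP_mul hf ih) => s _; rewrite exprS.
Qed.

Lemma LP_sum (I : Type) (r : seq I) (F : I -> C -> C) :
  (forall i, LP (F i)) -> LP (fun s => \sum_(i <- r) F i s).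
Proof.
move=> hF; elim: r => [|i r ih].
  by apply: LP_ext (LP_const 0) => s _; rewrite big_nil.
by apply: LP_ext (LP_add (hF i) ih) => s _; rewrite big_cons.
Qed.

Lemma LP_prod (I : Type) (r : seq I) (F : I -> C -> C) :
  (forall i, LP (F i)) -> LP (fun s => \prod_(i <- r) F i s).
Proof.
move=> hF; elim: r => [|i r ih].
  by apply: LP_ext (LP_const 1) => s _; rewrite big_nil.
by apply: LP_ext (LP_mul (hF i) ih) => s _; rewrite big_cons.
Qed.

Lemma LP_meval n (p : {mpoly C[n]}) (v : C -> 'I_n -> C) :
  (forall k, LP (fun s => v s k)) -> LP (fun s => p.@[v s]).
Proof.
move=> hv.
have h : LP (fun s => \sum_(m <- msupp p) p@_m * \prod_i v s i ^+ m i).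
  apply: LP_sum => m; apply: LP_mul; first exact: LP_const.
  have hp := @LP_prod _ (index_enum 'I_n) (fun i s => v s i ^+ m i) (fun i => LP_exp (m i) (hv i)).
  exact hp.
by apply: LP_ext h => s _; rewrite mevalE.
Qed.

Lemma LP_conj (P Q A B : mx) (a b : C -> C) k : LP a -> LP b ->
  LP (fun s => mx_coords (P *m (a s *: A + b s *: B) *m Q) k).
Proof.
move=> ha hb.
apply: LP_ext (LP_add (LP_mul ha (LP_const (mx_coords (P *m A *m Q) k)))
                      (LP_mul hb (LP_const (mx_coords (P *m B *m Q) k)))) => s _.
rewrite /mx_coords mulmxDr mulmxDl -!scalemxAr -!scalemxAl.
by rewrite linearD !linearZ /= !mxE.
Qed.

Lemma dichot (H : mx -> Prop) (S : {mpoly C[2 * 2]} -> Prop)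
  (hcl : forall g, g \in unitmx -> (H g <-> zero_locus S g))
  (gam : C -> mx) (hunit : forall s, s != 0 -> gam s \in unitmx)
  (hLP : forall k, LP (fun s => mx_coords (gam s) k)) :
  (forall s, s != 0 -> H (gam s)) \/
  exists q : {poly C}, q != 0 /\ forall s, s != 0 -> H (gam s) -> q.[s] = 0.
Proof.
case: (classic (forall s, s != 0 -> H (gam s))) => [h|h]; [by left | right].
have [s0 [s00 nH]] : exists s0, s0 != 0 /\ ~ H (gam s0).
  apply: NNPP => hn; apply: h => s s0; apply: NNPP => nH; apply: hn; exists s; split.
  - exact: s0.
  - exact: nH.
have [p [Sp pn]] : exists p, S p /\ p.@[mx_coords (gam s0)] != 0.
  apply: NNPP => hn; apply: nH; apply/(hcl _ (hunit _ s00)) => p Sp.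
  by apply: NNPP => hp; apply: hn; exists p; split => //; apply/eqP.
have [q [N hq]] := LP_meval p hLP.
exists q; split.
  apply/eqP => q0; have := hq s0 s00; rewrite q0 horner0 => /esym /eqP.
  by rewrite mulf_eq0 (negbTE pn) orbF expf_eq0 (negbTE s00) andbF.
move=> s sn0 Hs; rewrite hq //.
by have := (hcl _ (hunit _ sn0)).1 Hs p Sp => ->; rewrite mulr0.
Qed.
End LP.

Section Sep.
Variable C : closedFieldType.
Notation mx := 'M[C]_2.

Lemma meval_prod (r : seq C) (P : pred C) (G : C -> {mpoly C[2 * 2]}) v :
  (\prod_(rho <- r | P rho) G rho).@[v] = \prod_(rho <- r | P rho) (G rho).@[v].
Proof. exact: (big_morph (meval v) (mevalM v) (meval1 v)). Qed.

Lemma separate (Y : mx -> Prop) (hY : zariski_connected Y) (r : seq C)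
  (G : C -> {mpoly C[2 * 2]}) (rho0 : C)
  (cover : forall x, Y x -> exists2 rho, rho \in r & (G rho).@[mx_coords x] = 0)
  (huniq : forall x, Y x -> forall rho, rho \in r -> rho != rho0 ->
     (G rho).@[mx_coords x] = 0 -> (G rho0).@[mx_coords x] = 0 -> False)
  (x1 : mx) (Yx1 : Y x1) (base : (G rho0).@[mx_coords x1] = 0) :
  forall x, Y x -> (G rho0).@[mx_coords x] = 0.
Proof.
pose S1 := fun p => p = G rho0.
pose S2 := fun p => p = \prod_(rho <- r | rho != rho0) G rho.
have E1 x : zero_locus S1 x <-> (G rho0).@[mx_coords x] = 0.
  by split => [h|h p ->]; [apply: h|].
have E2 x : zero_locus S2 x <->
    exists rho, [/\ rho \in r, rho != rho0 & (G rho).@[mx_coords x] = 0].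
  split => [h|[rho [rr rn g0]] p ->].
    have := h _ erefl; rewrite meval_prod => /eqP; rewrite prodf_seq_eq0.
    by case/hasP => rho rr /andP [rn /eqP g0]; exists rho.
  apply/eqP; rewrite meval_prod prodf_seq_eq0; apply/hasP; exists rho => //.
  by rewrite rn g0 eqxx.
have hc : forall g, Y g -> zero_locus S1 g \/ zero_locus S2 g.
  move=> x Yx; have [rho rr g0] := cover x Yx.
  case: (eqVneq rho rho0) => [e|ne]; [left; apply/E1; rewrite -e // | right; apply/E2].
  by exists rho.
have hd : forall g, Y g -> zero_locus S1 g -> zero_locus S2 g -> False.
  move=> x Yx /E1 h1 /E2 [rho [rr rn g0]]; exact: (huniq x Yx rho rr rn g0 h1).
case: (hY S1 S2 hc hd).
- by move=> h x Yx; apply/E1/h.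
- move=> h; have /E2 [rho [rr rn g0]] := h x1 Yx1; case: (huniq x1 Yx1 rho rr rn g0 base).
Qed.
End Sep.

Section Lin.
Variable C : closedFieldType.
Notation mx := 'M[C]_2.

Definition Xc (i j : 'I_2) : {mpoly C[2 * 2]} := 'X_(mxvec_index i j).

Lemma Xc_eval (x : mx) i j : (Xc i j).@[mx_coords x] = x i j.
Proof. by rewrite mevalXU /mx_coords mxvecE. Qed.

Definition Lin (P Q : mx) i j : {mpoly C[2 * 2]} :=
  \sum_(k < 2) \sum_(l < 2) (P i k * Q l j) *: Xc k l.

Lemma Lin_eval P Q (x : mx) i j : (Lin P Q i j).@[mx_coords x] = (P *m x *m Q) i j.
Proof.
rewrite /Lin !big_ord2 !mevalD !mevalZ !Xc_eval !mulmx2E.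
ring.
Qed.

Definition dg (a b : C) : mx := mk2 a 0 0 b.
Definition ad (a b : C) : mx := mk2 0 a b 0.

Lemma dgM a b c d : dg a b *m dg c d = dg (a * c) (b * d).
Proof. by rewrite /dg mk2M; congr mk2; ring. Qed.
Lemma adM a b c d : ad a b *m ad c d = dg (a * d) (b * c).
Proof. by rewrite /dg /ad mk2M; congr mk2; ring. Qed.
Lemma addgM a b c d : ad a b *m dg c d = ad (a * d) (b * c).
Proof. by rewrite /dg /ad mk2M; congr mk2; ring. Qed.
Lemma dgadM a b c d : dg a b *m ad c d = ad (a * c) (b * d).
Proof. by rewrite /dg /ad mk2M; congr mk2; ring. Qed.
Lemma dg1 : dg 1 1 = 1%:M.
Proof. by rewrite mk2_1. Qed.

Lemma dg_inv a b : a != 0 -> b != 0 -> invmx (dg a b) = dg a^-1 b^-1.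
Proof. by move=> a0 b0; apply: inv_uniq; rewrite dgM !mulfV // dg1. Qed.
Lemma ad_inv a b : a != 0 -> b != 0 -> invmx (ad a b) = ad b^-1 a^-1.
Proof. by move=> a0 b0; apply: inv_uniq; rewrite adM !mulfV // dg1. Qed.
Lemma dg_unit a b : a != 0 -> b != 0 -> dg a b \in unitmx.
Proof. by move=> a0 b0; apply: (@unit_of _ _ (dg a^-1 b^-1)); rewrite dgM !mulfV // dg1. Qed.
Lemma ad_unit a b : a != 0 -> b != 0 -> ad a b \in unitmx.
Proof. by move=> a0 b0; apply: (@unit_of _ _ (ad b^-1 a^-1)); rewrite adM !mulfV // dg1. Qed.

Lemma diag_dg (x : mx) : diag_nonsing x ->
  [/\ x = dg (x 0 0) (x 1 1), x 0 0 != 0 & x 1 1 != 0].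
Proof.
case=> h1 h2; rewrite mulf_eq0 negb_or => /andP [a0 b0]; split => //.
by rewrite [x in LHS]mk2_eta h1 h2.
Qed.
Lemma antidiag_ad (x : mx) : antidiag_nonsing x ->
  [/\ x = ad (x 0 1) (x 1 0), x 0 1 != 0 & x 1 0 != 0].
Proof.
case=> h1 h2; rewrite mulf_eq0 negb_or => /andP [a0 b0]; split => //.
by rewrite [x in LHS]mk2_eta h1 h2.
Qed.
Lemma dg_diag a b : a != 0 -> b != 0 -> diag_nonsing (dg a b).
Proof. by move=> a0 b0; split; rewrite /dg ?mk2_01 ?mk2_10 ?mk2_00 ?mk2_11 // mulf_neq0. Qed.
Lemma ad_antidiag a b : a != 0 -> b != 0 -> antidiag_nonsing (ad a b).
Proof. by move=> a0 b0; split; rewrite /ad ?mk2_01 ?mk2_10 ?mk2_00 ?mk2_11 // mulf_neq0. Qed.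

Lemma roots_in (q : {poly C}) : q != 0 ->
  exists r : seq C, forall s, q.[s] = 0 -> s \in r.
Proof.
move=> q0; have [r hr] := closed_field_poly_normal q; exists r => s.
rewrite {1}hr hornerZ horner_prod => /eqP; rewrite mulf_eq0 lead_coef_eq0 (negbTE q0) /=.
rewrite prodf_seq_eq0 => /hasP [z zr]; rewrite hornerXsubC subr_eq0 => /eqP ->.
done.
Qed.
End Lin.

Section Comm.
Variable C : closedFieldType.
Notation mx := 'M[C]_2.

Lemma comm1 (a b : mx) (k : C) : a * b = k *: (b * a) ->
  forall j, k ^+ j *: (b ^+ j * a) = a * b ^+ j.
Proof.
move=> hab; elim=> [|j ih]; first by rewrite !expr0 scale1r mul1r mulr1.
rewrite [k ^+ _]exprS [b ^+ _]exprS -scalerA -mulrA scalerAr ih mulrA scalerAl.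
by rewrite mulrA -scalerAl -hab.
Qed.

Lemma comm2 (a b : mx) (k : C) : a * b = k *: (b * a) ->
  forall j i, k ^+ (j * i) *: (b ^+ j * a ^+ i) = a ^+ i * b ^+ j.
Proof.
move=> hab j; elim=> [|i ih]; first by rewrite muln0 !expr0 scale1r mul1r mulr1.
rewrite mulnS exprD -scalerA exprSr mulrA scalerAl ih.
by rewrite -[a ^+ i * b ^+ j * a]mulrA scalerAr (comm1 hab) mulrA.
Qed.

Lemma comm3 (a b : mx) (k : C) : a * b = k *: (b * a) -> forall i j i' j',
  k ^+ (j * i') *: (a ^+ i * b ^+ j * (a ^+ i' * b ^+ j')) = a ^+ (i + i') * b ^+ (j + j').
Proof.
move=> hab i j i' j'.
rewrite -mulrA [b ^+ j * _]mulrA scalerAr scalerAl (comm2 hab).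
by rewrite !mulrA -exprD -mulrA -exprD.
Qed.

Lemma unit_nz (x : mx) : x \in unitmx -> x != 0.
Proof. by apply: contraTneq => ->; rewrite unitmxE det0 unitr0. Qed.

Lemma bicyc_comm (H K : mx -> Prop) (hunit : forall g, H g -> g \in unitmx)
  (hK : forall g, K g -> exists c, g = c%:M) :
  bicyclic_quotient H K ->
  exists k : C, [/\ k != 0, ((forall g, K g -> g = 1%:M) -> k = 1) &
    forall h h', H h -> H h' -> exists e1 e2 : nat,
      k ^+ e1 *: (h *m h') = k ^+ e2 *: (h' *m h)].
Proof.
case=> a [b [n [m [[Ha Hb] _ _ Kc hall]]]].
have Ua := hunit _ Ha; have Ub := hunit _ Hb.
have [k ek] := hK _ Kc.
have hab : a * b = k *: (b * a).
  rewrite -mul_scalar_mx -ek !mulmxE -!mulrA.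
  have -> : invmx a = a^-1 by [].
  have -> : invmx b = b^-1 by [].
  by rewrite [b^-1 * (b * a)]mulrA mulVr // mul1r mulVr // mulr1.
have k0 : k != 0.
  apply/eqP => k0; have : (a *m b) \in unitmx by rewrite unitmx_mul Ua Ub.
  by rewrite mulmxE hab k0 scale0r => /unit_nz; rewrite eqxx.
exists k; split => //.
  move=> h1; have := h1 _ Kc; rewrite ek => /matrixP /(_ 0 0); rewrite !mxE /=.
  by [].
have hrep h : H h -> exists i j (mu : C), mu != 0 /\ a ^+ i * b ^+ j = mu *: h.
  move=> Hh; have [i [j Kij]] := hall h Hh; have [mu emu] := hK _ Kij.
  exists i, j, mu.
  have Uh := hunit _ Hh.
  have e : a ^+ i * b ^+ j = mu *: h.
    rewrite -mul_mx_scalar -emu mulmxA mulmxV // mul1mx; by [].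
  split => //; apply/eqP => mu0; move: e; rewrite mu0 scale0r => e.
  have : (a ^+ i *m b ^+ j) \in unitmx.
    by rewrite unitmx_mul; apply/andP; split; apply: unitrX.
  by rewrite mulmxE e => /unit_nz; rewrite eqxx.
move=> h h' Hh Hh'.
have [i [j [mu [mu0 e]]]] := hrep h Hh; have [i' [j' [mu' [mu0' e']]]] := hrep h' Hh'.
exists (j * i')%N, (j' * i)%N.
have h1 := comm3 hab i j i' j'; have h2 := comm3 hab i' j' i j.
rewrite addnC [(j' + j)%N]addnC -h1 e e' in h2.
move: h2; rewrite -!scalerAl -!scalerAr !scalerA => h2.
apply: (scalerI (mulf_neq0 mu0 mu0')); rewrite !scalerA !mulmxE.
have e1 : mu * mu' * k ^+ (j * i') = k ^+ (j * i') * mu * mu' by ring.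
have e2 : mu * mu' * k ^+ (j' * i) = k ^+ (j' * i) * mu' * mu by ring.
by rewrite e1 e2 h2.
Qed.
End Comm.

Lemma fin_pow (C : fieldType) (L : seq C) : uniq L ->
  (forall x y, x \in L -> y \in L -> x * y \in L) -> 0 \notin L ->
  forall x, x \in L -> x ^+ size L = 1.
Proof.
move=> uL Lm L0 x xL.
have x0 : x != 0 by apply: contraNneq L0 => <-.
pose f := fun y => x * y.
have um : uniq (map f L) by rewrite map_inj_uniq //; exact: mulfI.
have sub : {subset map f L <= L} by move=> z /mapP [y yL ->]; apply: Lm.
have sz : (size L <= size (map f L))%N by rewrite size_map.
have [_ eqm] := uniq_min_size um sub sz.
have pm := uniq_perm um uL eqm.
have := perm_big (x := 1) (op := *%R) _ pm (P := predT) (F := id).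
rewrite big_map big_split /= => e.
have P0 : \prod_(y <- L) y != 0.
  by rewrite prodf_seq_neq0; apply/allP => y yL /=; apply: contraNneq L0 => <-.
have ex : \prod_(y <- L) x = x ^+ size L.
  by elim: (L) => [|z s ih]; rewrite ?big_nil ?expr0 // big_cons ih exprS.
rewrite ex in e.
by apply: (mulIf P0); rewrite mul1r.
Qed.

Lemma fin_roots (C : fieldType) (L : seq C) : uniq L -> 1 \in L ->
  (forall x y, x \in L -> y \in L -> x * y \in L) -> 0 \notin L ->
  forall x, (x \in L) = (x ^+ size L == 1).
Proof.
move=> uL L1 Lm L0 x.
have m0 : (0 < size L)%N by case: L L1 {uL Lm L0} => //.
apply/idP/idP => [xL|/eqP xm]; first by rewrite (fin_pow uL Lm L0 xL).
apply/negPn/negP => xL.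
have ha : all (root ('X^(size L) - 1)) (x :: L).
  apply/allP => z; rewrite inE => /orP [/eqP ->|zL].
    by rewrite /root !hornerE xm subrr.
  by rewrite /root !hornerE (fin_pow uL Lm L0 zL) subrr.
have hu : uniq (x :: L) by rewrite /= xL.
have nz : ('X^(size L) - 1 : {poly C}) != 0 by rewrite -size_poly_eq0 size_Xn_sub_1.
have := max_poly_roots nz ha hu.
by rewrite size_Xn_sub_1 // ltnn.
Qed.

Ltac fld := field; repeat (apply/andP; split); try done.

Section Main.
Variable C : closedFieldType.
Notation mx := 'M[C]_2.
Variable H : mx -> Prop.
Variable S : {mpoly C[2 * 2]} -> Prop.
Variable P0 : mx.
Hypothesis hsub : is_subgroup_GL2 H.
Hypothesis hcl : forall g, g \in unitmx -> (H g <-> zero_locus S g).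
Hypothesis hP0 : P0 \in unitmx.
Hypothesis hmono : forall x, conj_set P0 H x -> monomial x.
Hypothesis hirr : irreducible_GL2 H.

Local Notation Pi := (invmx P0).
Local Notation H1 := (conj_set P0 H).

Lemma cK x : P0 *m (Pi *m x *m P0) *m Pi = x.
Proof. by rewrite !mulmxA mulmxV // mul1mx -mulmxA mulmxV // mulmx1. Qed.
Lemma cK' x : Pi *m (P0 *m x *m Pi) *m P0 = x.
Proof. by rewrite !mulmxA mulVmx // mul1mx -mulmxA mulVmx // mulmx1. Qed.

Lemma H1_1 : H1 1%:M.
Proof. by rewrite /conj_set mulmx1 mulmxV //; case: hsub. Qed.

Lemma H1_M x y : H1 x -> H1 y -> H1 (x *m y).
Proof.
rewrite /conj_set => hx hy.
have -> : P0 *m (x *m y) *m Pi = (P0 *m x *m Pi) *m (P0 *m y *m Pi).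
  by rewrite !mulmxA mulmxKV.
by case: hsub => _ _ hM _; apply: hM.
Qed.

Lemma H1_unit x : H1 x -> x \in unitmx.
Proof.
move=> hx; case: hsub => hu _ _ _; have := hu _ hx.
by rewrite !unitmx_mul => /andP [/andP [_ ->]].
Qed.

Lemma H1_V x : H1 x -> H1 (invmx x).
Proof.
move=> hx; have ux := H1_unit hx; rewrite /conj_set.
have -> : P0 *m invmx x *m Pi = invmx (P0 *m x *m Pi).
  by apply/esym/inv_uniq; rewrite !mulmxA mulmxKV // mulmxK // mulmxV.
by case: hsub => _ _ _ hV; apply: hV.
Qed.

Lemma H1_H g : H g -> H1 (Pi *m g *m P0).
Proof. by rewrite /conj_set cK. Qed.

Lemma dg_nz a b : H1 (dg a b) -> a != 0 /\ b != 0.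
Proof.
move=> /hmono [[_ _]|[]]; rewrite /dg ?mk2_00 ?mk2_11 ?mk2_01 ?mk2_10.
  by rewrite mulf_eq0 negb_or => /andP.
by move=> _ _; rewrite mulr0 eqxx.
Qed.

Definition cv (a b : C) : 'cV[C]_2 := \col_i (if i == 0 then a else b).

Lemma cvP (u v : 'cV[C]_2) : u 0 0 = v 0 0 -> u 1 0 = v 1 0 -> u = v.
Proof.
move=> h0 h1; apply/matrixP => i j; rewrite (ord1 j).
by case: (ord2P i) => ->.
Qed.

Lemma mk2_cv p q r s a b : mk2 p q r s *m cv a b = cv (p * a + q * b) (r * a + s * b).
Proof. by apply: cvP; rewrite !mxE !big_ord2 !mxE. Qed.

Lemma cv_scale c a b : c *: cv a b = cv (c * a) (c * b).
Proof. by apply: cvP; rewrite !mxE. Qed.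

Lemma cv_nz a b : a != 0 -> cv a b != 0.
Proof. by move=> a0; apply/eqP => /matrixP /(_ (0 : 'I_2) (0 : 'I_1)); rewrite !mxE /= => e; rewrite e eqxx in a0. Qed.

Lemma eig_false (v : 'cV[C]_2) : v != 0 -> (forall x, H1 x -> exists c, x *m v = c *: v) -> False.
Proof.
move=> v0 hv; apply: hirr; exists (P0 *m v); split.
  apply: contraNneq v0 => e; by rewrite -(mulKmx hP0 v) e mulmx0.
move=> h Hh; have [c hc] := hv _ (H1_H Hh); exists c.
rewrite -{1}(cK h) -mulmxA [Pi *m (P0 *m v)]mulmxA mulVmx // mul1mx -mulmxA hc.
by rewrite scalemxAr.
Qed.

Lemma exists_anti : exists l1 l2, [/\ l1 != 0, l2 != 0 & H1 (ad l1 l2)].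
Proof.
apply: NNPP => hn; apply: (@eig_false (cv 1 0) (cv_nz _ (oner_neq0 C))) => x hx.
case: (hmono hx) => [/diag_dg [ex _ _]|/antidiag_ad [ex l10 l20]].
  by exists (x 0 0); rewrite {1}ex /dg mk2_cv cv_scale; congr cv; ring.
by case: hn; exists (x 0 1), (x 1 0); split => //; rewrite -ex.
Qed.


Lemma sqrt_ex (z : C) : exists c, c ^+ 2 = z.
Proof.
have : size ('X^2 - z%:P : {poly C}) != 1 by rewrite size_XnsubC.
move/closed_rootP => [c]; rewrite /root !hornerE subr_eq0 => /eqP e; by exists c.
Qed.

Lemma DS : (forall s, s != 0 -> H1 (dg s s^-1)) \/
  exists q : {poly C}, q != 0 /\ forall s, s != 0 -> H1 (dg s s^-1) -> q.[s] = 0.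
Proof.
have := @dichot C H S hcl (fun s => P0 *m dg s s^-1 *m Pi) _ _; apply.
  move=> s s0; rewrite !unitmx_mul hP0 unitmx_inv hP0 dg_unit //.
  by rewrite invr_eq0.
move=> k; apply: LP_ext (LP_conj P0 Pi (dg 1 0) (dg 0 1) k (@LP_id C) (@LP_inv C)).
move=> s _; congr (mx_coords _ k); congr (_ *m _ *m _).
by apply: mx2P; rewrite !mxE /= ?mulr1 ?mulr0 ?addr0 ?add0r.
Qed.

Lemma DT : (forall s, s != 0 -> H1 (dg s s)) \/
  exists q : {poly C}, q != 0 /\ forall s, s != 0 -> H1 (dg s s) -> q.[s] = 0.
Proof.
have := @dichot C H S hcl (fun s => P0 *m dg s s *m Pi) _ _; apply.
  by move=> s s0; rewrite !unitmx_mul hP0 unitmx_inv hP0 dg_unit.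
move=> k; apply: LP_ext (LP_conj P0 Pi (dg 1 1) (dg 1 1) k (@LP_id C) (LP_const 0)).
move=> s _; congr (mx_coords _ k); congr (_ *m _ *m _).
by apply: mx2P; rewrite !mxE /= ?mulr1 ?mulr0 ?addr0 ?add0r.
Qed.

Section W.
Variables l1 l2 : C.
Hypotheses (l10 : l1 != 0) (l20 : l2 != 0) (Hw : H1 (ad l1 l2)).

Lemma swapH a b : H1 (dg a b) -> H1 (dg b a).
Proof.
move=> h; have [a0 b0] := dg_nz h.
have e : ad l1 l2 *m dg a b *m invmx (ad l1 l2) = dg b a.
  rewrite ad_inv // addgM adM; congr dg.
    by rewrite mulrAC mulfV // mul1r.
  by rewrite mulrAC mulfV // mul1r.
by rewrite -e; apply: H1_M; [apply: H1_M|apply: H1_V].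
Qed.

Lemma prodH a b : H1 (dg a b) -> H1 (dg (a * b) (a * b)).
Proof.
move=> h; have := H1_M h (swapH h); rewrite dgM; congr H1; congr dg; ring.
Qed.

Lemma ratioH a b : H1 (dg a b) -> H1 (dg (a / b) (b / a)).
Proof.
move=> h; have [a0 b0] := dg_nz h.
by have := H1_M h (H1_V (swapH h)); rewrite dg_inv // dgM.
Qed.

Lemma antiH a b : a != 0 -> b != 0 ->
  (H1 (ad a b) <-> H1 (dg (l2^-1 * b) (l1^-1 * a))).
Proof.
move=> a0 b0; split => h.
  by have := H1_M (H1_V Hw) h; rewrite ad_inv // adM.
have := H1_M Hw h; rewrite addgM !mulrA !mulfV // !mul1r; congr H1; congr ad.
Qed.

Lemma scal_contra : (forall a b, H1 (dg a b) -> a = b) -> False.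
Proof.
move=> hs; have [c hc] := sqrt_ex (l1 * l2).
apply: (@eig_false (cv l1 c) (cv_nz _ l10)) => x hx.
case: (hmono hx) => [/diag_dg [ex a0 b0]|/antidiag_ad [ex a0 b0]].
  rewrite ex in hx; have e := hs _ _ hx.
  by exists (x 0 0); rewrite {1}ex -e /dg mk2_cv cv_scale; congr cv; ring.
rewrite ex in hx; have := (antiH a0 b0).1 hx => /hs e.
have e' : x 1 0 * l1 = x 0 1 * l2.
  have h1 : x 1 0 = l2 * (l2^-1 * x 1 0) by rewrite mulrA mulfV // mul1r.
  have h2 : x 0 1 = l1 * (l1^-1 * x 0 1) by rewrite mulrA mulfV // mul1r.
  by rewrite h1 [in RHS]h2 e; ring.
exists (l1^-1 * x 0 1 * c); rewrite {1}ex /ad mk2_cv cv_scale; congr cv.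
  by field.
rewrite mul0r addr0 e' (_ : l1^-1 * x 0 1 * c * c = l1^-1 * x 0 1 * c ^+ 2); last by rewrite expr2 mulrA.
by rewrite hc; field.
Qed.

Lemma caseA : (forall s, s != 0 -> H1 (dg s s^-1)) -> (forall s, s != 0 -> H1 (dg s s)) ->
  forall x, H1 x <-> monomial x.
Proof.
move=> hS hT.
have hd a b : a != 0 -> b != 0 -> H1 (dg a b).
  move=> a0 b0; have [sg hsg] := sqrt_ex (a * b).
  have sg0 : sg != 0 by apply: contraNneq (mulf_neq0 a0 b0) => e; rewrite -hsg e expr2 mulr0.
  have := H1_M (hT _ sg0) (hS (a / sg) (mulf_neq0 a0 (invr_neq0 sg0))).
  rewrite dgM; congr H1; congr dg; first by field.
  rewrite invf_div; have -> : sg * (sg / a) = sg ^+ 2 / a by rewrite expr2 mulrA.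
  by rewrite hsg; field.
move=> x; split; first exact: hmono.
case=> [/diag_dg [ex a0 b0]|/antidiag_ad [ex a0 b0]]; rewrite ex; first exact: hd.
by apply/(antiH a0 b0)/hd; apply: mulf_neq0; rewrite ?invr_eq0.
Qed.

Definition pb (P : Prop) : bool := if excluded_middle_informative P then true else false.
Lemma pbP (P : Prop) : pb P <-> P.
Proof. by rewrite /pb; case: excluded_middle_informative. Qed.

Lemma caseB (qT : {poly C}) : (forall s, s != 0 -> H1 (dg s s^-1)) -> qT != 0 ->
  (forall s, s != 0 -> H1 (dg s s) -> qT.[s] = 0) ->
  exists m : nat, [/\ (0 < m)%N,
    (forall a b, a != 0 -> b != 0 -> (H1 (dg a b) <-> (a * b) ^+ m = 1)),
    (forall a b, a != 0 -> b != 0 -> (H1 (ad a b) <-> (a * b) ^+ m = (l1 * l2) ^+ m))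
    & ((l1 * l2) ^+ m = 1 \/ (l1 * l2) ^+ m = -1)].
Proof.
move=> hS qT0 hqT.
have [rT hrT] := roots_in qT0.
pose D d := H1 (dg d 1).
have Dr d : D d -> d \in rT.
  move=> hD; have [d0 _] := dg_nz hD; apply: hrT.
  by have := prodH hD; rewrite mulr1 => /(hqT _ d0).
pose L := filter (fun d => pb (D d)) (undup rT).
have memL d : d \in L <-> D d.
  rewrite mem_filter; split => [/andP [/pbP //]|hD].
  by rewrite mem_undup Dr // andbT; apply/pbP.
have uL : uniq L by rewrite filter_uniq // undup_uniq.
have L1 : 1 \in L by apply/memL; rewrite /D dg1; exact: H1_1.
have Lm x y : x \in L -> y \in L -> x * y \in L.
  by move=> /memL hx /memL hy; apply/memL; have := H1_M hx hy; rewrite dgM mulr1.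
have L0 : 0 \notin L by apply/negP => /memL /dg_nz [] /eqP.
have fr := fin_roots uL L1 Lm L0.
exists (size L).
have hdiag a b : a != 0 -> b != 0 -> (H1 (dg a b) <-> (a * b) ^+ size L = 1).
  move=> a0 b0; split => [h|e].
    apply/eqP; rewrite -fr; apply/memL.
    by have := H1_M h (hS b b0); rewrite dgM mulfV.
  have abL : a * b \in L by rewrite fr e.
  have /memL hD := abL; have := H1_M hD (hS _ (invr_neq0 b0)); rewrite dgM invrK mul1r.
  by rewrite -mulrA mulfV // mulr1.
split => //.
- by case: L L1 {memL uL Lm L0 fr hdiag}.
- move=> a b a0 b0; rewrite antiH // hdiag ?mulf_neq0 ?invr_neq0 //.
  have -> : l2^-1 * b * (l1^-1 * a) = (a * b) / (l1 * l2) by rewrite invfM; ring.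
  rewrite expr_div_n; have c0 : (l1 * l2) ^+ size L != 0 by rewrite expf_neq0 // mulf_neq0.
  split => [e|->]; last by rewrite mulfV.
  by apply: (mulIf (invr_neq0 c0)); rewrite e mulfV.
- have := H1_M Hw Hw; rewrite adM hdiag ?mulf_neq0 //.
  rewrite [l2 * l1]mulrC -expr2 exprAC => /eqP; rewrite sqrf_eq1 => /orP [] /eqP; by [left|right].
Qed.


Lemma conj_scal a : Pi *m a%:M *m P0 = a%:M.
Proof. by rewrite mul_mx_scalar -scalemxAl mulVmx // scalemx1. Qed.
Lemma conj_scal' a : P0 *m a%:M *m Pi = a%:M.
Proof. by rewrite mul_mx_scalar -scalemxAl mulmxV // scalemx1. Qed.

Section Y.
Variable Y : mx -> Prop.
Hypotheses (hYH : forall x, Y x -> H x) (hYc : zariski_connected Y) (hY1 : Y 1%:M).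

Lemma Y_diag x : Y x -> exists a b, Pi *m x *m P0 = dg a b.
Proof.
have base : (Lin Pi P0 0 1).@[mx_coords 1%:M] = 0.
  by rewrite Lin_eval mulmx1 mulVmx // mxE.
have := @separate C Y hYc [:: 0; 1]
  (fun rho => if rho == 0 then Lin Pi P0 0 1 else Lin Pi P0 0 0) 0 _ _ _ hY1.
rewrite eqxx => h Yx.
have hx := H1_H (hYH Yx).
have e01 : (Pi *m x *m P0) 0 1 = 0.
  rewrite -Lin_eval; apply: h => //.
  - move=> y Yy; have hy := H1_H (hYH Yy).
    case: (hmono hy) => [[e _ _]|[e _ _]].
      by exists 0; rewrite ?inE ?eqxx // Lin_eval.
    by exists 1; rewrite ?inE ?eqxx ?orbT // oner_eq0 Lin_eval.
  - move=> y Yy rho _ rn; rewrite (negbTE rn) !Lin_eval => e0 e1.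
    have hy := H1_H (hYH Yy).
    by case: (hmono hy) => [[_ _]|[_ _]]; rewrite ?e0 ?e1 ?mul0r ?eqxx.
case: (hmono hx) => [/diag_dg [ex _ _]|[_ _]]; first by exists ((Pi *m x *m P0) 0 0), ((Pi *m x *m P0) 1 1).
by rewrite e01 mul0r eqxx.
Qed.

Lemma Y_scal (qS : {poly C}) : qS != 0 ->
  (forall s, s != 0 -> H1 (dg s s^-1) -> qS.[s] = 0) ->
  forall x, Y x -> exists a, x = a%:M /\ H1 (dg a a).
Proof.
move=> qS0 hqS.
have [rS hrS] := roots_in qS0.
pose G := fun rho : C => Lin Pi P0 0 0 - rho *: Lin Pi P0 1 1.
have GE y rho : (G rho).@[mx_coords y] = (Pi *m y *m P0) 0 0 - rho * (Pi *m y *m P0) 1 1.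
  by rewrite mevalB mevalZ !Lin_eval.
have base : (G 1).@[mx_coords 1%:M] = 0.
  by rewrite GE mulmx1 mulVmx // !mxE mul1r subrr.
have cover : forall y, Y y -> exists2 rho, rho \in rS & (G rho).@[mx_coords y] = 0.
  move=> y Yy; have [p [q ey]] := Y_diag Yy.
  have hy := H1_H (hYH Yy); rewrite ey in hy; have [p0 q0] := dg_nz hy.
  exists (p / q).
    apply: hrS; apply: hqS; first by rewrite mulf_neq0 ?invr_neq0.
    by rewrite invf_div; apply: ratioH.
  by rewrite GE ey /dg mk2_00 mk2_11; field.
have huniq : forall y, Y y -> forall rho, rho \in rS -> rho != 1 ->
     (G rho).@[mx_coords y] = 0 -> (G 1).@[mx_coords y] = 0 -> False.
  move=> y Yy rho _ rn; rewrite !GE.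
  have [p [q ey]] := Y_diag Yy.
  have hy := H1_H (hYH Yy); rewrite ey in hy; have [p0 q0] := dg_nz hy.
  rewrite ey /dg mk2_00 mk2_11 mul1r => /eqP; rewrite subr_eq0 => /eqP -> /eqP.
  rewrite subr_eq0 -{2}[q]mul1r (inj_eq (mulIf q0)) => /eqP e.
  by rewrite e eqxx in rn.
have h := @separate C Y hYc rS G 1 cover huniq _ hY1 base.
move=> x Yx.
have [a [b ex]] := Y_diag Yx.
have hx := H1_H (hYH Yx); rewrite ex in hx; have [a0 b0] := dg_nz hx.
have eab : a = b.
  by have := h _ Yx; rewrite GE ex /dg mk2_00 mk2_11 mul1r => /eqP; rewrite subr_eq0 => /eqP.
exists a; split; last by rewrite -eab in hx.
by rewrite -[x]cK ex -eab /dg -mk2_scalar conj_scal'.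
Qed.

Lemma Y_one (qS qT : {poly C}) : qS != 0 ->
  (forall s, s != 0 -> H1 (dg s s^-1) -> qS.[s] = 0) -> qT != 0 ->
  (forall s, s != 0 -> H1 (dg s s) -> qT.[s] = 0) ->
  forall x, Y x -> x = 1%:M.
Proof.
move=> qS0 hqS qT0 hqT.
have hs := Y_scal qS0 hqS.
have [rT hrT] := roots_in qT0.
pose G := fun rho : C => Lin Pi P0 0 0 - rho%:MP.
have GE y rho : (G rho).@[mx_coords y] = (Pi *m y *m P0) 0 0 - rho.
  by rewrite mevalB mevalC !Lin_eval.
have base : (G 1).@[mx_coords 1%:M] = 0.
  by rewrite GE mulmx1 mulVmx // !mxE subrr.
have cover : forall y, Y y -> exists2 rho, rho \in rT & (G rho).@[mx_coords y] = 0.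
  move=> y Yy; have [p [ey hp]] := hs y Yy.
  have [p0 _] := dg_nz hp.
  exists p; first by apply: hrT; apply: hqT.
  by rewrite GE ey conj_scal mxE /= mulr1n subrr.
have huniq : forall y, Y y -> forall rho, rho \in rT -> rho != 1 ->
     (G rho).@[mx_coords y] = 0 -> (G 1).@[mx_coords y] = 0 -> False.
  move=> y Yy rho _ rn; rewrite !GE.
  have [p [ey hp]] := hs y Yy.
  rewrite ey conj_scal mxE /= mulr1n => /eqP; rewrite subr_eq0 => /eqP -> /eqP.
  by rewrite subr_eq0 (negbTE rn).
have h := @separate C Y hYc rT G 1 cover huniq _ hY1 base.
move=> x Yx.
have [a [ex ha]] := hs x Yx.
have : a = 1.
  by have := h _ Yx; rewrite GE ex conj_scal mxE /= mulr1n => /eqP; rewrite subr_eq0 => /eqP.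
by move=> e; rewrite ex e.
Qed.
End Y.


Lemma conjM x y : (P0 *m x *m Pi) *m (P0 *m y *m Pi) = P0 *m (x *m y) *m Pi.
Proof. by rewrite !mulmxA mulmxKV. Qed.

Lemma unscale_conj (c1 c2 : C) x y :
  c1 *: (P0 *m x *m Pi) = c2 *: (P0 *m y *m Pi) -> c1 *: x = c2 *: y.
Proof.
move=> e; have := congr1 (fun z => Pi *m z *m P0) e => /=.
by rewrite -!scalemxAr -!scalemxAl !cK'.
Qed.

Hypothesis hbic : bicyclic_quotient H (identity_component H).

Lemma diag_rel (qS : {poly C}) : qS != 0 ->
  (forall s, s != 0 -> H1 (dg s s^-1) -> qS.[s] = 0) ->
  exists k : C, [/\ k != 0,
    ((forall g, identity_component H g -> g = 1%:M) -> k = 1) &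
    forall a b, H1 (dg a b) -> exists e1 e2 : nat,
      k ^+ e1 * b = k ^+ e2 * a /\ k ^+ e1 * a = k ^+ e2 * b].
Proof.
move=> qS0 hqS.
have hKs : forall g, identity_component H g -> exists c, g = c%:M.
  move=> g [Y [hYH hYc hY1 hYg]].
  by have [a [-> _]] := Y_scal hYH hYc hY1 qS0 hqS hYg; exists a.
have hu : forall g, H g -> g \in unitmx by case: hsub.
have [k [k0 hk1 hcomm]] := bicyc_comm hu hKs hbic.
exists k; split => // a b hab.
have [e1 [e2 e]] := hcomm _ _ Hw hab.
exists e1, e2.
move: e; rewrite !conjM => /unscale_conj.
rewrite addgM dgadM => e.
have e01 := congr1 (fun z : mx => z 0 1) e; have e10 := congr1 (fun z : mx => z 1 0) e.
move: e01 e10; rewrite /= !mxE /= => e01 e10.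
split.
  by apply: (mulIf l10); rewrite -!mulrA [b * l1]mulrC e01; ring.
by apply: (mulIf l20); rewrite -!mulrA [a * l2]mulrC e10; ring.
Qed.


Lemma pm_of (k : C) (e1 e2 : nat) a b : k != 0 -> b != 0 ->
  k ^+ e1 * b = k ^+ e2 * a -> k ^+ e1 * a = k ^+ e2 * b -> b = a \/ b = - a.
Proof.
move=> k0 b0 h1 h2.
have c10 : k ^+ e1 != 0 by rewrite expf_neq0.
have : (k ^+ e1) ^+ 2 * b = (k ^+ e2) ^+ 2 * b.
  by rewrite !expr2 -!mulrA h1 mulrCA h2 mulrCA.
move/(mulIf b0)/eqP; rewrite eqf_sqr => /orP [] /eqP e.
  by left; apply: (mulfI c10); rewrite h1 e.
by right; apply: (mulfI c10); rewrite h1 e mulNr mulrN opprK.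
Qed.

Lemma caseC (qS : {poly C}) : qS != 0 ->
  (forall s, s != 0 -> H1 (dg s s^-1) -> qS.[s] = 0) ->
  conj_to H (@Vgroup C).
Proof.
move=> qS0 hqS.
have [k [k0 hk1 hrel]] := diag_rel qS0 hqS.
have hpm a b : H1 (dg a b) -> b = a \/ b = - a.
  move=> h; have [_ b0] := dg_nz h; have [e1 [e2 [h1 h2]]] := hrel _ _ h.
  exact: pm_of k0 b0 h1 h2.
case: DT => [hT|[qT [qT0 hqT]]]; last first.
  exfalso; apply: scal_contra => a b h.
  have k1 : k = 1.
    apply: hk1 => g [Y [hYH hYc hY1 hYg]].
    exact: (Y_one hYH hYc hY1 qS0 hqS qT0 hqT hYg).
  have [e1 [e2 [h1 _]]] := hrel _ _ h.
  by move: h1; rewrite k1 !expr1n !mul1r.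
have [e [e0 he]] : exists e, e != 0 /\ H1 (dg e (- e)).
  apply: NNPP => hn; apply: scal_contra => a b h.
  case: (hpm _ _ h) => // eb; exfalso; apply: hn; exists a.
  by have [a0 _] := dg_nz h; rewrite -eb.
have hd a b : a != 0 -> b != 0 -> (H1 (dg a b) <-> b = a \/ b = - a).
  move=> a0 b0; split; first exact: hpm.
  case=> ->; first exact: hT.
  have := H1_M he (hT _ (mulf_neq0 a0 (invr_neq0 e0))).
  by rewrite dgM; congr H1; congr dg; fld.
have [d hd2] := sqrt_ex (l2 / l1).
have d0 : d != 0.
  apply/eqP => d00; move: hd2; rewrite d00 expr2 mulr0 => /esym /eqP.
  by rewrite mulf_eq0 invr_eq0 (negbTE l10) (negbTE l20).
pose Q := dg 1 d.
have UQ : Q \in unitmx by rewrite dg_unit ?oner_neq0.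
have iQ : invmx Q = dg 1 d^-1 by rewrite dg_inv ?invr1 ?oner_neq0.
exists (P0 *m Q); split; first by rewrite unitmx_mul hP0 UQ.
move=> x.
have iPQ : invmx (P0 *m Q) = invmx Q *m Pi.
  by apply: inv_uniq; rewrite mulmxA mulmxK // mulmxV.
rewrite /conj_set iPQ.
have -> : P0 *m Q *m x *m (invmx Q *m Pi) = P0 *m (Q *m x *m invmx Q) *m Pi by rewrite !mulmxA.
change (H1 (Q *m x *m invmx Q) <-> Vgroup x); rewrite iQ.
have sq (a b : C) : a != 0 -> b != 0 -> (a ^+ 2 = b ^+ 2 <-> b = a \/ b = - a).
  move=> a0 b0; split => [ee|[] -> //]; last by rewrite sqrrN.
  by move/eqP: ee; rewrite eqf_sqr => /orP [] /eqP ->; [left|right; rewrite opprK].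
have hl2 : l2 = l1 * d ^+ 2 by rewrite hd2; fld.
have mono_cases (y : mx) : @monomial C y ->
  (exists a b, [/\ a != 0, b != 0 & y = dg a b]) \/
  (exists a b, [/\ a != 0, b != 0 & y = ad a b]).
  case=> [/diag_dg [ey a0 b0]|/antidiag_ad [ey a0 b0]].
    by left; exists (y 0 0), (y 1 1); split.
  by right; exists (y 0 1), (y 1 0); split.
split => [hx|hV].
  have ex : x = dg 1 d^-1 *m (Q *m x *m dg 1 d^-1) *m Q.
    by rewrite -iQ !mulmxA mulVmx // mul1mx mulmxKV.
  move: ex hx; set y := Q *m x *m dg 1 d^-1 => ex hx.
  case: (mono_cases _ (hmono hx)) => [[a [b [a0 b0 ey]]]|[a [b [a0 b0 ey]]]];
    rewrite ey in ex hx; rewrite ex /Q.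
    rewrite !dgM mul1r mulr1 (_ : d^-1 * b * d = b); last by fld.
    left; split; first exact: dg_diag.
    by rewrite /dg mk2_00 mk2_11; apply/sq => //; apply: hpm.
  rewrite dgadM addgM mul1r mulr1.
  right; split; first by apply: ad_antidiag; rewrite mulf_neq0 ?invr_neq0.
  rewrite /ad mk2_01 mk2_10.
  have := (antiH a0 b0).1 hx => /hpm [] ee.
    have -> : b = l2 * (l1^-1 * a) by rewrite ee; fld.
    by rewrite hl2 !exprMn; fld.
  have -> : b = - (l2 * (l1^-1 * a)) by rewrite ee; fld.
  by rewrite hl2 !exprMn sqrrN !exprMn; fld.
case: hV => [[/diag_dg [ex a0 b0] hsq]|[/antidiag_ad [ex a0 b0] hsq]]; rewrite ex /Q.
  rewrite !dgM mul1r mulr1 (_ : d * x 1 1 * d^-1 = x 1 1); last by fld.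
  by apply/hd => //; apply/sq.
rewrite dgadM addgM mul1r mulr1.
apply/(antiH _ _).2; rewrite ?mulf_neq0 ?invr_neq0 //.
apply/hd; rewrite ?mulf_neq0 ?invr_neq0 //.
have := (sq _ _ a0 b0).1 hsq; case=> ->; [left|right]; rewrite hl2; fld.
Qed.
End W.
End Main.

Section Excl.
Variable C : closedFieldType.
Hypothesis hC : [pchar C] =i pred0.
Notation mx := 'M[C]_2.

Lemma nat_nz n : (0 < n)%N -> (n%:R : C) != 0.
Proof. by move=> n0; rewrite (pcharf0P _).1 // -lt0n. Qed.

Lemma natr_eq1 n : (n%:R : C) = 1 -> n = 1%N.
Proof.
case: n => [|n]; first by move/eqP; rewrite eq_sym oner_eq0.
rewrite -natr1 => /eqP; rewrite -subr_eq0 addrK => /eqP h.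
by case: n h => // n h; move: (@nat_nz n.+1 (ltn0Sn n)); rewrite h eqxx.
Qed.

Lemma two_nz : (2 : C) != 0. Proof. exact: nat_nz. Qed.
Lemma m1_neq1 : (-1 : C) != 1.
Proof.
apply/eqP => e; move: two_nz; rewrite -[2 : C]/(1 *+ 2) mulr2n -{1}e addNr eqxx.
by [].
Qed.

Lemma conj_ex (Hs G Phi : mx -> Prop)
  (hPhi : forall P x, P \in unitmx -> (Phi (P *m x *m invmx P) <-> Phi x)) :
  conj_to Hs G -> (exists g, Hs g /\ Phi g) -> (exists x, G x /\ Phi x).
Proof.
move=> [P [uP hP]] [g [Hg Pg]]; exists (invmx P *m g *m P); split.
  by apply/hP; rewrite /conj_set !mulmxA mulmxV // mul1mx mulmxK.
by apply/(hPhi _ _ uP); rewrite !mulmxA mulmxV // mul1mx mulmxK.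
Qed.

Lemma conj_ex' (Hs G Phi : mx -> Prop)
  (hPhi : forall P x, P \in unitmx -> (Phi (P *m x *m invmx P) <-> Phi x)) :
  conj_to Hs G -> (exists x, G x /\ Phi x) -> (exists g, Hs g /\ Phi g).
Proof.
move=> [P [uP hP]] [x [Gx Px]]; exists (P *m x *m invmx P); split.
  exact/hP.
exact/(hPhi _ _ uP).
Qed.

Lemma det_conj (P x : mx) : P \in unitmx -> \det (P *m x *m invmx P) = \det x.
Proof.
move=> uP; rewrite !det_mulmx det_inv mulrC mulrA mulVf ?mul1r //.
by rewrite -unitfE -unitmxE.
Qed.

Lemma tr_conj (P x : mx) : P \in unitmx -> \tr (P *m x *m invmx P) = \tr x.
Proof. by move=> uP; rewrite mxtrace_mulC mulmxA mulVmx // mul1mx. Qed.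

Lemma sq_conj (P x : mx) : P \in unitmx ->
  ((exists a, (P *m x *m invmx P) *m (P *m x *m invmx P) = a%:M) <->
   (exists a, x *m x = a%:M)).
Proof.
move=> uP.
have e : (P *m x *m invmx P) *m (P *m x *m invmx P) = P *m (x *m x) *m invmx P.
  by rewrite !mulmxA mulmxKV.
rewrite e; split => [[a ha]|[a ha]]; exists a.
  have := congr1 (fun z => invmx P *m z *m P) ha => /=.
  by rewrite !mulmxA mulVmx // mul1mx mulmxKV // mul_mx_scalar -scalemxAl mulVmx // scalemx1.
by rewrite ha mul_mx_scalar -scalemxAl mulmxV // scalemx1.
Qed.

Lemma det_diag (x : mx) : diag_nonsing x -> \det x = x 0 0 * x 1 1.
Proof. by case=> h1 h2 _; rewrite det2 h1 mul0r subr0. Qed.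
Lemma det_anti (x : mx) : antidiag_nonsing x -> \det x = - (x 0 1 * x 1 0).
Proof. by case=> h1 h2 _; rewrite det2 h1 mul0r sub0r. Qed.
Lemma tr_anti (x : mx) : antidiag_nonsing x -> \tr x = 0.
Proof. by case=> h1 h2 _; rewrite tr2 h1 h2 addr0. Qed.

Lemma D_det m (x : mx) : Dminus m x \/ Dplus m x -> \det x ^+ (m * 2) = 1.
Proof.
rewrite exprM.
case=> [[[hd e]|[ha e]]|[[hd e]|[ha e]]];
  rewrite ?(det_diag hd) ?(det_anti ha) ?e ?expr1n //.
- by rewrite -exprM mulnC exprM sqrrN -exprM mulnC exprM e sqrrN expr1n.
- by rewrite -exprM mulnC exprM sqrrN -exprM mulnC exprM e expr1n.
Qed.

Lemma no4 m (x : mx) : (0 < m)%N -> Dminus m x \/ Dplus m x -> \det x != 4.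
Proof.
move=> m0 hx; apply/eqP => e; have := D_det hx; rewrite e -natrX => /natr_eq1.
by rewrite -[m]prednK // mulSn expnD => /eqP; rewrite muln_eq1 => /andP [].
Qed.

Lemma det_dg (a b : C) : \det (dg a b) = a * b.
Proof. by rewrite det2 /dg mk2_00 mk2_11 mk2_01 mul0r subr0. Qed.
Lemma tr_dg (a b : C) : \tr (dg a b) = a + b.
Proof. by rewrite tr2 /dg mk2_00 mk2_11. Qed.
Lemma det_ad (a b : C) : \det (ad a b) = - (a * b).
Proof. by rewrite det2 /ad mk2_00 mk2_01 mk2_10 mul0r sub0r. Qed.

Lemma four : (2 : C) * 2 = 4. Proof. by rewrite -natrM. Qed.

Lemma excl_D_4 (Hs : mx -> Prop) m : (0 < m)%N ->
  (conj_to Hs (@Dminus C m) \/ conj_to Hs (@Dplus C m)) ->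
  (conj_to Hs (@Vgroup C) \/ conj_to Hs (@fullmonomial C)) -> False.
Proof.
move=> m0 hD hVM.
pose Phi := fun x : mx => \det x = 4.
have hPhi : forall P x, P \in unitmx -> (Phi (P *m x *m invmx P) <-> Phi x).
  by move=> P x uP; rewrite /Phi det_conj.
have w : exists g, Hs g /\ Phi g.
  have wd : diag_nonsing (dg 2 2 : mx) by apply: dg_diag; exact: two_nz.
  case: hVM => hc; apply: (conj_ex' hPhi hc); exists (dg 2 2); split;
    rewrite /Phi ?det_dg ?four //.
  - by left; split; rewrite // /dg mk2_00 mk2_11.
  - by left.
case: hD => hc; have [x [Dx Px]] := conj_ex hPhi hc w.
  by move/eqP: Px; apply/negP; apply: no4 m0 _; left.
by move/eqP: Px; apply/negP; apply: no4 m0 _; right.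
Qed.

Lemma V_sq (x : mx) : Vgroup x -> exists a, x *m x = a%:M.
Proof.
case=> [[/diag_dg [ex _ _] e]|[/antidiag_ad [ex _ _] e]]; rewrite ex.
  by exists (x 0 0 ^+ 2); rewrite dgM -!expr2 e mk2_scalar.
by exists (x 0 1 * x 1 0); rewrite adM [x 1 0 * _]mulrC mk2_scalar.
Qed.

Lemma excl_34 (Hs : mx -> Prop) :
  conj_to Hs (@Vgroup C) -> conj_to Hs (@fullmonomial C) -> False.
Proof.
move=> hV hM.
pose Phi := fun x : mx => ~ exists a, x *m x = a%:M.
have hPhi : forall P x, P \in unitmx -> (Phi (P *m x *m invmx P) <-> Phi x).
  by move=> P x uP; rewrite /Phi; split => h1 h2; apply: h1; apply/(sq_conj x uP).
have w : exists g, Hs g /\ Phi g.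
  apply: (conj_ex' hPhi hM); exists (dg 1 2); split.
    by left; apply: dg_diag; rewrite ?oner_neq0 ?two_nz.
  move=> [a ha]; move: ha; rewrite dgM mulr1 four mk2_scalar /dg => ha.
  have h0 := congr1 (fun z : mx => z 0 0) ha; have h1 := congr1 (fun z : mx => z 1 1) ha.
  move: h0 h1; rewrite /= !mk2_00 !mk2_11 => <- /natr_eq1.
  by [].
have [x [Vx Px]] := conj_ex hPhi hV w.
by apply: Px; apply: V_sq.
Qed.

Lemma root_m1 m : (0 < m)%N -> exists e : C, e ^+ m = -1.
Proof.
move=> m0; have : size ('X^m - (-1)%:P : {poly C}) != 1 by rewrite size_XnsubC // eqSS -lt0n.
move/closed_rootP => [e]; rewrite /root !hornerE subr_eq0 => /eqP he; by exists e.
Qed.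

Lemma excl_12 (Hs : mx -> Prop) m k : (0 < m)%N -> (0 < k)%N ->
  conj_to Hs (@Dminus C m) -> conj_to Hs (@Dplus C k) -> False.
Proof.
move=> m0 k0 hm hk.
have tr (Phi : mx -> Prop) :
    (forall P x, P \in unitmx -> (Phi (P *m x *m invmx P) <-> Phi x)) ->
    (exists x, Dplus k x /\ Phi x) -> exists y, Dminus m y /\ Phi y.
  by move=> hPhi w; apply: (conj_ex hPhi hm); apply: (conj_ex' hPhi hk).
have tr' (Phi : mx -> Prop) :
    (forall P x, P \in unitmx -> (Phi (P *m x *m invmx P) <-> Phi x)) ->
    (exists x, Dminus m x /\ Phi x) -> exists y, Dplus k y /\ Phi y.
  by move=> hPhi w; apply: (conj_ex hPhi hk); apply: (conj_ex' hPhi hm).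
have detI c : forall P x, P \in unitmx -> ((fun y : mx => \det y = c) (P *m x *m invmx P) <->
     (fun y : mx => \det y = c) x).
  by move=> P x uP /=; rewrite det_conj.
have hm1 : (-1 : C) ^+ m = 1.
  have w : exists x : mx, @Dplus C k x /\ \det x = -1.
    exists (ad 1 1); split; last by rewrite det_ad mulr1.
    right; split; first by apply: ad_antidiag; rewrite oner_neq0.
    by rewrite /ad mk2_01 mk2_10 mulr1 expr1n.
  have [y [Dy ey]] := tr _ (detI (-1)) w.
  case: Dy => [[hd e]|[ha e]]; first by move: e; rewrite -(det_diag hd) ey.
  move: e; rewrite -[y 0 1 * y 1 0]opprK -(det_anti ha) ey opprK expr1n => /eqP.
  by rewrite eq_sym (negbTE (m1_neq1)).
have hc (d : C) : d != 0 -> d ^+ k = 1 -> d ^+ m = 1.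
  move=> d0 dk.
  pose Phi := fun y : mx => \det y = d /\ \tr y != 0.
  have hPhi : forall P x, P \in unitmx -> (Phi (P *m x *m invmx P) <-> Phi x).
    by move=> P x uP; rewrite /Phi det_conj ?tr_conj.
  have w : exists x : mx, @Dplus C k x /\ Phi x.
    case: (eqVneq (d + 1) 0) => [d1|d1].
      have [i hi] := sqrt_ex (-1 : C).
      have i0 : i != 0 by apply/eqP => i00; move: hi; rewrite i00 expr2 mulr0 => /eqP; rewrite eq_sym oppr_eq0 oner_eq0.
      have ed : d = -1 by apply/eqP; rewrite -subr_eq0 opprK d1.
      exists (dg i i); split.
        left; split; first by apply: dg_diag.
        by rewrite /dg mk2_00 mk2_11 -expr2 hi -ed.
      split; first by rewrite det_dg -expr2 hi ed.
      by rewrite tr_dg -mulr2n -mulr_natr mulf_neq0 ?two_nz.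
    exists (dg d 1); split.
      left; split; first by apply: dg_diag; rewrite ?oner_neq0.
      by rewrite /dg mk2_00 mk2_11 mulr1.
    by split; rewrite ?det_dg ?mulr1 ?tr_dg.
  have [y [Dy [ey ty]]] := tr _ hPhi w.
  case: Dy => [[hd e]|[ha e]]; first by rewrite -ey (det_diag hd).
  by move: ty; rewrite (tr_anti ha) eqxx.
have [e he] := root_m1 m0.
have e0 : e != 0.
  by apply/eqP => e00; move: he; rewrite e00 expr0n eqn0Ngt m0 /= => /eqP; rewrite eq_sym oppr_eq0 oner_eq0.
have w : exists x : mx, @Dminus C m x /\ \det x = - e.
  exists (ad 1 e); split; last by rewrite det_ad mul1r.
  right; split; first exact: (ad_antidiag (oner_neq0 C) e0).
  by rewrite /ad mk2_01 mk2_10 mul1r.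
have [y [Dy ey]] := tr' _ (detI (- e)) w.
case: Dy => [[hd ek]|[ha ek]].
  move: ek; rewrite -(det_diag hd) ey => /(hc _ _).
  rewrite oppr_eq0 e0 exprNn hm1 mul1r he => /(_ isT) /eqP.
  by rewrite (negbTE m1_neq1).
move: ek; rewrite -[y 0 1 * y 1 0]opprK -(det_anti ha) ey opprK => /(hc _ e0).
by rewrite he => /eqP; rewrite (negbTE m1_neq1).
Qed.
End Excl.

Unset Implicit Arguments.
Set Strict Implicit.

Theorem mainTheorem11 (C : closedFieldType) (hC : [pchar C] =i pred0)
  (H : 'M[C]_2 -> Prop) :
  algebraic_subgroup_GL2 H ->
  imprimitive_GL2 H ->
  bicyclic_quotient H (identity_component H) ->
  exactly_one4 (case1 H) (case2 H) (case3 H) (case4 H).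
Proof.
move=> [hsub [S hcl]] [hirr [P0 [hP0 hmono]]] hbic.
split.
  have [l1 [l2 [l10 l20 Hw]]] := exists_anti hP0 hmono hirr.
  case: (DS hcl hP0) => [hS|[qS [qS0 hqS]]]; last first.
    by right; right; left; exact: (caseC hsub hcl hP0 hmono hirr l10 l20 Hw hbic qS0 hqS).
  case: (DT hcl hP0) => [hT|[qT [qT0 hqT]]].
    right; right; right; exists P0; split => // x.
    exact: (caseA hsub hP0 hmono l10 l20 Hw hS hT).
  have [m [m0 hd ha hc]] := caseB hsub hP0 hmono l10 l20 Hw hS qT0 hqT.
  have key (s : C) : (l1 * l2) ^+ m = s ->
      forall x, conj_set P0 H x <->
        ((diag_nonsing x /\ (x 0 0 * x 1 1) ^+ m = 1) \/
         (antidiag_nonsing x /\ (x 0 1 * x 1 0) ^+ m = s)).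
    move=> hs x; split => [hx|].
      case: (hmono _ hx) => [hdx|hax].
        left; split => //; have [ex a0 b0] := diag_dg hdx.
        by apply/(hd _ _ a0 b0); rewrite -ex.
      right; split => //; have [ex a0 b0] := antidiag_ad hax.
      by rewrite -hs; apply/(ha _ _ a0 b0); rewrite -ex.
    case=> [[hdx e]|[hax e]].
      by have [ex a0 b0] := diag_dg hdx; rewrite ex; apply/(hd _ _ a0 b0).
    by have [ex a0 b0] := antidiag_ad hax; rewrite ex; apply/(ha _ _ a0 b0); rewrite e hs.
  case: hc => hc.
    right; left; exists m; split => //; exists P0; split => // x.
    exact: (key _ hc x).
  left; exists m; split => //; exists P0; split => // x.
  exact: (key _ hc x).
split.
- by move=> [[m [m0 h1]] [k [k0 h2]]]; exact: (excl_12 hC m0 k0 h1 h2).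
- by move=> [[m [m0 h1]] h3]; exact: (excl_D_4 hC m0 (or_introl h1) (or_introl h3)).
- by move=> [[m [m0 h1]] h4]; exact: (excl_D_4 hC m0 (or_introl h1) (or_intror h4)).
- by move=> [[m [m0 h1]] h3]; exact: (excl_D_4 hC m0 (or_intror h1) (or_introl h3)).
- split.
    by move=> [[m [m0 h1]] h4]; exact: (excl_D_4 hC m0 (or_intror h1) (or_intror h4)).
  by move=> [h3 h4]; exact: (excl_34 hC h3 h4).
Qed.
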